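(* Let $d\ge1$, $\emptyset\ne H\subset\mathbb{R}^d$, $R>0$, and let $x,y\in\mathbb{R}^d$ with $d(x,H)\ge R$ and $d(y,H)\ge R$. Let $f(t):=d(T_tx,T_ty)$ for $t\ge0$. Then for every $0\le t<R$, $f$ is differentiable at $t$ (one-sidedly at $t=0$) and $$-\dot f(t)\le\frac{f(t)}{R-t}.$$
   Context: $d(\cdot,\cdot)$ is Euclidean distance and $d(x,H)=\inf_{z\in H}|x-z|$. Let $\bar H$ be the closure of $H$; for each $x$ let $\pi(x)\in\bar H$ be a point with $|x-\pi(x)|=d(x,H)$ (any one if several). For $t\ge0$, $T_t x:=x+t\frac{\pi(x)-x}{|\pi(x)-x|}$ if $d(x,H)>t$ and $T_t x:=\pi(x)$ if $d(x,H)\le t$. *)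

(* Defs.v *)
From HB Require Import structures.
From mathcomp Require Import all_boot all_order all_algebra.
From mathcomp Require Import all_classical all_reals all_analysis.
Set Implicit Arguments. Unset Strict Implicit. Unset Printing Implicit Defensive.
Import Order.TTheory GRing.Theory Num.Theory.
Import numFieldNormedType.Exports.
Local Open Scope classical_set_scope.
Local Open Scope ring_scope.

Definition enorm {R : realType} {d : nat} (v : 'rV[R]_d) : R :=
  Num.sqrt (\sum_(i < d) (v ord0 i) ^+ 2).

Definition distH {R : realType} {d : nat} (H : set 'rV[R]_d) (x : 'rV[R]_d) : R :=
  inf [set enorm (x - z) | z in H].

(* T_t x, given a nearest-point selection pi *)
Definition Tmap {R : realType} {d : nat} (H : set 'rV[R]_d)
  (pi : 'rV[R]_d -> 'rV[R]_d) (t : R) (x : 'rV[R]_d) : 'rV[R]_d :=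
  if t < distH H x then x + (t / enorm (pi x - x)) *: (pi x - x) else pi x.

(* Main.v *)
Require Import Defs.
From HB Require Import structures.
From mathcomp Require Import all_boot all_order all_algebra.
From mathcomp Require Import all_classical all_reals all_analysis.
From mathcomp Require Import ring lra.
Import Order.TTheory GRing.Theory Num.Theory.
Import numFieldNormedType.Exports.
Local Open Scope classical_set_scope.
Local Open Scope ring_scope.
Set Implicit Arguments. Unset Strict Implicit.

Section Dot.
Variables (R : realType) (d : nat).
Implicit Types (u v w : 'rV[R]_d).

Definition dot u v : R := \sum_(i < d) u ord0 i * v ord0 i.

Lemma dotC u v : dot u v = dot v u.
Proof. by apply: eq_bigr => i _; rewrite mulrC. Qed.

Lemma dotDl u v w : dot (u + v) w = dot u w + dot v w.
Proof. by rewrite /dot -big_split; apply: eq_bigr => i _; rewrite !mxE mulrDl. Qed.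

Lemma dotDr u v w : dot w (u + v) = dot w u + dot w v.
Proof. by rewrite dotC dotDl !(dotC w). Qed.

Lemma dotZl a u v : dot (a *: u) v = a * dot u v.
Proof. by rewrite /dot mulr_sumr; apply: eq_bigr => i _; rewrite !mxE mulrA. Qed.

Lemma dotZr a u v : dot v (a *: u) = a * dot v u.
Proof. by rewrite dotC dotZl dotC. Qed.

Lemma dotNl u v : dot (- u) v = - dot u v.
Proof. by rewrite -scaleN1r dotZl mulN1r. Qed.

Lemma dotNr u v : dot v (- u) = - dot v u.
Proof. by rewrite dotC dotNl dotC. Qed.

Lemma dotBl u v w : dot (u - v) w = dot u w - dot v w.
Proof. by rewrite dotDl dotNl. Qed.

Lemma dotBr u v w : dot w (u - v) = dot w u - dot w v.
Proof. by rewrite dotDr dotNr. Qed.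

Lemma dot_ge0 u : 0 <= dot u u.
Proof. by apply: sumr_ge0 => i _; rewrite -expr2 sqr_ge0. Qed.

Lemma dot_eq0 u : dot u u = 0 -> u = 0.
Proof.
move=> /eqP; rewrite psumr_eq0 => [/allP H|i _]; last by rewrite -expr2 sqr_ge0.
apply/matrixP => i j; rewrite !mxE (ord1 i).
have := H j (mem_index_enum j); rewrite /= mulf_eq0 orbb => /eqP ->; by [].
Qed.

Lemma enormE u : enorm u = Num.sqrt (dot u u).
Proof. by rewrite /enorm /dot; congr Num.sqrt; apply: eq_bigr => i _; rewrite expr2. Qed.

Lemma dot0l v : dot 0 v = 0.
Proof. by rewrite /dot big1 // => i _; rewrite mxE mul0r. Qed.

Lemma cauchy_schwarz u v : dot u v ^+ 2 <= dot u u * dot v v.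
Proof.
have [/dot_eq0 ->|] := eqVneq (dot v v) 0.
  by rewrite dotC !dot0l expr0n /= mulr0.
move=> hv.
have hp : 0 < dot v v by rewrite lt_def hv dot_ge0.
set a := dot v v; set b := dot u v; set P := dot u u.
have := dot_ge0 (a *: u - b *: v).
rewrite !(dotBl, dotBr, dotZl, dotZr) -/a -/b -/P (dotC v u) -/b => h.
have : 0 <= a * (a * P - b ^+ 2) by rewrite expr2; lra.
by rewrite pmulr_rge0 // subr_ge0 mulrC.
Qed.

End Dot.

Section S.
Variables (R : realType) (d : nat).
Implicit Types (u v w : 'rV[R]_d).

Lemma enorm_ge0 u : 0 <= enorm u.
Proof. by rewrite enormE sqrtr_ge0. Qed.

Lemma sqr_enorm u : enorm u ^+ 2 = dot u u.
Proof. by rewrite enormE sqr_sqrtr // dot_ge0. Qed.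

Lemma enorm_triangle u v : enorm (u + v) <= enorm u + enorm v.
Proof.
rewrite -(ler_pXn2r (n:=2)) ?nnegrE ?addr_ge0 ?enorm_ge0 //.
rewrite sqr_enorm sqrrD !sqr_enorm !(dotDl, dotDr) (dotC v u).
have := cauchy_schwarz u v.
rewrite -!sqr_enorm -exprMn => h.
have : `|dot u v| <= enorm u * enorm v.
  rewrite -(ler_pXn2r (n:=2)) ?nnegrE ?normr_ge0 ?mulr_ge0 ?enorm_ge0 //.
  by rewrite real_normK ?num_real.
move=> h3; have := ler_norm (dot u v); lra.

Qed.

Lemma enormN u : enorm (- u) = enorm u.
Proof. by rewrite !enormE dotNl dotNr opprK. Qed.

Lemma enormB u v : enorm (u - v) = enorm (v - u).
Proof. by rewrite -enormN opprB. Qed.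

Lemma entry_le_mx u (i : 'I_d) : `|u ord0 i| <= `|u|.
Proof.
rewrite [X in _ <= X](_ : _ = mx_norm u) // mx_normrE.
by apply: (le_bigmax 0 (fun ij : 'I_1 * 'I_d => `|u ij.1 ij.2|) (ord0, i)).
Qed.

Lemma distH_le (H : set 'rV[R]_d) x z : H z -> distH H x <= enorm (x - z).
Proof.
move=> Hz; rewrite /distH.
have := @ge_inf R [set enorm (x - z) | z in H]; apply; last by exists z.
by exists 0 => r [z' _ <-]; apply: enorm_ge0.
Qed.

Lemma distH_closure (H : set 'rV[R]_d) x c :
  closure H c -> distH H x <= enorm (x - c).
Proof.
move=> Hc; rewrite leNgt; apply/negP => hlt.
set del := distH H x - enorm (x - c).
have hdel : 0 < del by rewrite subr_gt0.
set eps := del / (d%:R + 1).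
have heps : 0 < eps by rewrite divr_gt0 // ltr_wpDl.
have [z [Hz Bz]] := Hc _ (nbhsx_ballx c eps heps).
have hz : enorm (c - z) < del.
  rewrite -(ltr_pXn2r (n:=2)) ?nnegrE ?enorm_ge0 ?ltW //.
  rewrite sqr_enorm /dot.
  have hb : forall i, (c - z) ord0 i * (c - z) ord0 i <= eps ^+ 2.
    move=> i; rewrite -expr2 -real_normK ?num_real //.
    rewrite lerXn2r ?nnegrE ?normr_ge0 ?ltW //.
    apply: (le_lt_trans (entry_le_mx (c - z) i)).
    by move: Bz; rewrite mx_norm_ball /=.
  apply: (le_lt_trans (ler_sum _ (fun i _ => hb i))).
  rewrite sumr_const card_ord -mulr_natr /eps expr_div_n.
  have hd : 0 <= d%:R :> R by [].
  rewrite -[X in _ < X]mulr1 -mulrA ltr_pM2l ?exprn_gt0 //.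
  rewrite mulrC ltr_pdivrMr ?exprn_gt0 ?ltr_wpDl // mul1r.
  rewrite sqrrD1; nra.
have := distH_le x Hz.
have := enorm_triangle (x - c) (c - z).
rewrite addrA subrK => h1 h2.
have : distH H x < distH H x by apply: (le_lt_trans h2); apply: (le_lt_trans h1); rewrite /del in hz; lra.
by rewrite ltxx.
Qed.

End S.

Section Geo.
Variables (R : realType) (d : nat).
Implicit Types (u v w q : 'rV[R]_d).

Lemma dot_unit_bound q u : dot u u = 1 -> `|dot q u| <= enorm q.
Proof.
move=> hu.
rewrite -(ler_pXn2r (n:=2)) ?nnegrE ?normr_ge0 ?enorm_ge0 //.
by rewrite real_normK ?num_real // sqr_enorm -[X in _ <= X]mulr1 -hu cauchy_schwarz.
Qed.

Lemma shift_ge q u (D t : R) : dot u u = 1 -> D <= enorm q -> 0 <= t -> t <= D ->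
  (D - t) ^+ 2 <= dot (q + t *: u) (q + t *: u).
Proof.
move=> hu hD t0 tD.
rewrite !(dotDl, dotDr, dotZl, dotZr) hu (dotC u q) -sqr_enorm.
have := dot_unit_bound q hu; have := ler_norm (- dot q u); rewrite normrN.
move=> h1 h2; set N := enorm q in hD h2 *; set g := dot q u in h1 h2 *.
have : - N <= g by lra.
move=> h3.
have h4 : 0 <= N - t by lra.
have h5 : (D - t) ^+ 2 <= (N - t) ^+ 2 by rewrite lerXn2r ?nnegrE //; lra.
have h6 : t * (- N) <= t * g by rewrite ler_wpM2l.
rewrite expr2 in h5 *; rewrite expr2; nra.
Qed.

Lemma dotDZ q v (h : R) :
  dot (q + h *: v) (q + h *: v) = dot q q + 2 * h * dot q v + h ^+ 2 * dot v v.
Proof. by rewrite !(dotDl, dotDr, dotZl, dotZr) (dotC v q); ring. Qed.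

Lemma dot3 q v1 v2 (a1 a2 : R) :
  dot (q + a1 *: v1 + a2 *: v2) (q + a1 *: v1 + a2 *: v2) =
  dot q q + a1 ^+ 2 * dot v1 v1 + a2 ^+ 2 * dot v2 v2 + 2 * a1 * dot q v1
  + 2 * a2 * dot q v2 + 2 * a1 * a2 * dot v1 v2.
Proof. by rewrite !(dotDl, dotDr, dotZl, dotZr) (dotC v1 q) (dotC v2 q) (dotC v2 v1); ring. Qed.

End Geo.

Lemma sqrt_quot (R : realType) (P E V h : R) : h != 0 -> 0 <= P ->
  0 <= P + 2 * h * E + h ^+ 2 * V ->
  (Num.sqrt (P + 2 * h * E + h ^+ 2 * V) - Num.sqrt P) / h =
  (2 * E + h * V) / (Num.sqrt (P + 2 * h * E + h ^+ 2 * V) + Num.sqrt P).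
Proof.
set Q := P + 2 * h * E + h ^+ 2 * V => h0 P0 Q0.
have sQ := sqrtr_ge0 Q; have sP := sqrtr_ge0 P.
have [S0|S0] := eqVneq (Num.sqrt Q + Num.sqrt P) 0.
  have e1 : Num.sqrt Q = 0 by lra.
  have e2 : Num.sqrt P = 0 by lra.
  by rewrite S0 e1 e2 subrr mul0r invr0 mulr0.
have eQ : Num.sqrt Q ^+ 2 = Q by rewrite sqr_sqrtr.
have eP : Num.sqrt P ^+ 2 = P by rewrite sqr_sqrtr.
have -> : 2 * E + h * V = (Q - P) / h.
  have -> : Q - P = (2 * E + h * V) * h by rewrite /Q; ring.
  by rewrite mulfK.
have -> : Q - P = (Num.sqrt Q - Num.sqrt P) * (Num.sqrt Q + Num.sqrt P).
  by rewrite -{1}eQ -{1}eP; ring.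
by rewrite mulrAC mulfK.
Qed.

Lemma key_ineq (R : realType) (P al be rx ry s : R) : 0 < s -> s <= rx -> s <= ry ->
  0 <= P ->
  rx ^+ 2 <= P + 2 * (- ry) * be + (- ry) ^+ 2 ->
  ry ^+ 2 <= P + 2 * (- rx) * (- al) + (- rx) ^+ 2 ->
  (be - al) * s <= P.
Proof.
move=> s0 srx sry P0 G1 G2.
have A : 2 * ry * be <= P + ry ^+ 2 - rx ^+ 2.
  by move: G1; rewrite sqrrN; lra.
have B : - (2 * rx * al) <= P + rx ^+ 2 - ry ^+ 2.
  by move: G2; rewrite sqrrN; lra.
have hrx : 0 < rx by lra.
have hry : 0 < ry by lra.
have A' := ler_wpM2l (ltW hrx) A.
have B' := ler_wpM2l (ltW hry) B.
have C : 2 * rx * ry * (be - al) <= P * (rx + ry).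
  have : 0 <= (rx + ry) * (rx - ry) ^+ 2 by rewrite mulr_ge0 ?sqr_ge0 //; lra.
  move: A' B'; rewrite !expr2; nra.
have [hn|hp] := lerP (be - al) 0.
  by apply: le_trans (mulr_le0_ge0 hn (ltW s0)) P0.
have D : s * (rx + ry) <= 2 * rx * ry by nra.
have : (be - al) * s * (rx + ry) <= P * (rx + ry).
  have E1 := ler_wpM2l (ltW hp) D.
  move: E1 C; nra.
by rewrite ler_pM2r //; lra.
Qed.

Theorem corollary1 (R : realType) (d : nat) (H : set 'rV[R]_d)
  (pi : 'rV[R]_d -> 'rV[R]_d) (Rr : R) (x y : 'rV[R]_d) :
  (0 < d)%N ->
  H !=set0 ->
  (forall z, closure H (pi z) /\ enorm (z - pi z) = distH H z) ->
  0 < Rr ->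
  Rr <= distH H x -> Rr <= distH H y ->
  let f := fun t : R => enorm (Tmap H pi t x - Tmap H pi t y) in
  forall t : R, 0 <= t -> t < Rr ->
  exists D : R,
    ((fun h : R => (f (t + h) - f t) / h) @
       within [set h : R | h != 0 /\ 0 <= t + h] (nbhs (0 : R)) --> D)
    /\ - D <= f t / (Rr - t).
Proof.
move=> d0 Hne Hpi R0 Rx Ry f t t0 tR.
have [ca ea] := Hpi x; have [cb eb] := Hpi y.
have hfx : distH H x <= enorm (x - pi y) := distH_closure x cb.
have hfy : distH H y <= enorm (y - pi x) := distH_closure y ca.
move: ea eb ca cb hfx hfy Rx Ry.
set Dx := distH H x; set Dy := distH H y; set a := pi x; set b := pi y.
move=> ea eb ca cb hfx hfy Rx Ry.
have hDx : 0 < Dx by apply: lt_le_trans Rx.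
have hDy : 0 < Dy by apply: lt_le_trans Ry.
set u := Dx^-1 *: (a - x); set w := Dy^-1 *: (b - y).
have hTx : forall s, 0 <= s -> s < Rr -> Tmap H pi s x = x + s *: u.
  move=> s s0 sR; rewrite /Tmap ifT; last by apply: lt_le_trans Rx.
  by rewrite -/a enormB ea /u scalerA.
have hTy : forall s, 0 <= s -> s < Rr -> Tmap H pi s y = y + s *: w.
  move=> s s0 sR; rewrite /Tmap ifT; last by apply: lt_le_trans Ry.
  by rewrite -/b enormB eb /w scalerA.
have hDx0 : Dx != 0 by rewrite gt_eqF.
have hDy0 : Dy != 0 by rewrite gt_eqF.
have hu : dot u u = 1.
  rewrite /u dotZl dotZr -sqr_enorm enormB ea; field; exact: hDx0.
have hw : dot w w = 1.
  rewrite /w dotZl dotZr -sqr_enorm enormB eb; field; exact: hDy0.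
have hax : a = x + Dx *: u by rewrite /u scalerA mulfV ?gt_eqF // scale1r addrC subrK.
have hby : b = y + Dy *: w by rewrite /w scalerA mulfV ?gt_eqF // scale1r addrC subrK.
set p := (x - y) + t *: (u - w); set v := u - w.
have hf : forall s, 0 <= s -> s < Rr -> f s = enorm (p + (s - t) *: v).
  move=> s s0 sR; rewrite /f hTx // hTy //; congr enorm.
  by apply/matrixP => i j; rewrite !mxE; ring.
set P := dot p p; set E := dot p v; set V := dot v v.
have hQ : forall h, dot (p + h *: v) (p + h *: v) = P + 2 * h * E + h ^+ 2 * V.
  by move=> h; rewrite dotDZ.
set rx := Dx - t; set ry := Dy - t.
set al := dot p u; set be := dot p w; set c := dot u w.
have G1 : rx ^+ 2 <= P + 2 * (- ry) * be + (- ry) ^+ 2.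
  have := dotDZ p w (- ry); rewrite hw mulr1 -/P -/be => <-.
  have -> : p + (- ry) *: w = (x - b) + t *: u.
    by rewrite /p /ry /rx hby; apply/matrixP => i j; rewrite !mxE; ring.
  apply: shift_ge => //; lra.
have G2 : ry ^+ 2 <= P + 2 * (- rx) * (- al) + (- rx) ^+ 2.
  have := dotDZ (- p) u (- rx); rewrite hu mulr1 !dotNl !dotNr opprK -/P -/al => <-.
  have -> : - p + (- rx) *: u = (y - a) + t *: w.
    by rewrite /p /ry /rx hax; apply/matrixP => i j; rewrite !mxE; ring.
  apply: shift_ge => //; lra.
have F1 : Dx ^+ 2 <= P + ry ^+ 2 + t ^+ 2 + 2 * (- ry) * be + 2 * (- t) * al + 2 * (- ry) * (- t) * c.
  have := dot3 p w u (- ry) (- t).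
  rewrite hw hu (dotC w u) -/P -/al -/be -/c sqrrN sqrrN !mulr1 => <-.
  have -> : p + (- ry) *: w + (- t) *: u = x - b.
    by rewrite /p /ry /rx hby; apply/matrixP => i j; rewrite !mxE; ring.
  rewrite -sqr_enorm (ler_pXn2r (n:=2)) ?nnegrE ?enorm_ge0 ?(ltW hDx) //; exact: hfx.
have F2 : Dy ^+ 2 <= P + rx ^+ 2 + t ^+ 2 + 2 * (- rx) * (- al) + 2 * (- t) * (- be) + 2 * (- rx) * (- t) * c.
  have := dot3 (- p) u w (- rx) (- t).
  rewrite hw hu !dotNl !dotNr opprK -/P -/al -/be -/c sqrrN sqrrN !mulr1 => <-.
  have -> : - p + (- rx) *: u + (- t) *: w = y - a.
    by rewrite /p /ry /rx hax; apply/matrixP => i j; rewrite !mxE; ring.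
  rewrite -sqr_enorm (ler_pXn2r (n:=2)) ?nnegrE ?enorm_ge0 ?(ltW hDy) //; exact: hfy.
have hE : E = al - be by rewrite /E /v dotBr.
have hV : V = 2 - 2 * c.
  by rewrite /V /v !(dotBl, dotBr) hu hw (dotC w u) -/c; ring.
have hP0 : 0 <= P by apply: dot_ge0.
have hft : f t = Num.sqrt P.
  by rewrite hf // subrr scale0r addr0 enormE.
have key : (be - al) * (Rr - t) <= P.
  apply: (key_ineq (rx := rx) (ry := ry)) => //; rewrite ?subr_gt0 //; rewrite /rx /ry; lra.
have hPV : P = 0 -> V = 0 /\ E = 0.
  move=> P0.
  have al0 : al = 0.
    have := cauchy_schwarz p u; rewrite -/P -/al hu P0 mul0r => h.
    by apply/eqP; rewrite -sqrf_eq0 eq_le h sqr_ge0.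
  have be0 : be = 0.
    have := cauchy_schwarz p w; rewrite -/P -/be hw P0 mul0r => h.
    by apply/eqP; rewrite -sqrf_eq0 eq_le h sqr_ge0.
  have hE0 : E = 0 by rewrite hE al0 be0 subrr.
  split => //.
  have [tz|tp] := eqVneq t 0.
    have hxy : x = y.
      apply/eqP; rewrite -subr_eq0; apply/eqP/dot_eq0.
      by move: P0; rewrite /P /p tz scale0r addr0.
    have huw : u = w by rewrite /u /w /a /b /Dx /Dy hxy.
    by rewrite /V /v huw subrr dot0l.
  have tpos : 0 < t by rewrite lt_def tp t0.
  move: F1 F2; rewrite P0 al0 be0 /rx /ry => F1 F2.
  have hc : t * (Dx - t + (Dy - t)) * (1 - c) <= 0 by nra.
  have hc1 : 1 - c <= 0.
    by move: hc; rewrite pmulr_rle0 // mulr_gt0 //; lra.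
  have := dot_ge0 v; rewrite -/V => hV0.
  by apply/eqP; rewrite eq_le hV0 hV; lra.
set g := fun h : R => (2 * E + h * V) /
  (Num.sqrt (P + 2 * h * E + h ^+ 2 * V) + Num.sqrt P).
have Hq : forall h, h != 0 -> 0 <= t + h -> t + h < Rr -> g h = (f (t + h) - f t) / h.
  move=> h h0 th thR.
  rewrite (hf (t + h)) // hft enormE (_ : t + h - t = h); last by ring.
  rewrite hQ sqrt_quot // -hQ; exact: dot_ge0.
have Hg : g h @[h --> (0 : R)] --> E / Num.sqrt P.
  have [P0|Pn0] := eqVneq P 0.
    have [V0 E0] := hPV P0.
    have -> : g = fun _ => 0.
      by apply: funext => h; rewrite /g V0 E0 !mulr0 addr0 mul0r.
    by rewrite E0 mul0r; apply: cvg_cst.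
  have Ppos : 0 < P by rewrite lt_def Pn0 hP0.
  have sPpos : 0 < Num.sqrt P by rewrite sqrtr_gt0.
  have -> : E / Num.sqrt P = g 0.
    rewrite /g !(mul0r, mulr0, addr0, expr0n) /=.
    rewrite (_ : Num.sqrt P + Num.sqrt P = 2 * Num.sqrt P); last by ring.
    by rewrite invfM mulrACA mulfV ?mul1r // pnatr_eq0.
  rewrite /g.
  apply: cvgM.
    apply: cvgD; first exact: cvg_cst.
    by apply: cvgM; [exact: cvg_id | exact: cvg_cst].
  apply: cvgV.
    rewrite !(mul0r, mulr0, addr0, expr0n) /=; rewrite gt_eqF //; lra.
  apply: cvgD; last exact: cvg_cst.
  apply: (@cvg_comp _ _ _ (fun h => P + 2 * h * E + h ^+ 2 * V) Num.sqrt); last exact: sqrt_continuous.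
  apply: cvgD; last by apply: cvgM; [apply: cvgM; exact: cvg_id|exact: cvg_cst].
  apply: cvgD; first exact: cvg_cst.
  by apply: cvgM; [apply: cvgM; [exact: cvg_cst| exact: cvg_id]|exact: cvg_cst].
exists (E / Num.sqrt P); split.
  apply: cvg_trans (near_eq_cvg _) (cvg_within_filter _ Hg).
  have hb : \forall h \near (0:R), `|h| < Rr - t by apply: nbhs0_lt; lra.
  rewrite /within /=.
  apply: filterS hb => h hh [h0 th]; apply: Hq => //.
  have := ler_norm h; lra.
rewrite hft.
have [P0|Pn0] := eqVneq P 0.
  by rewrite P0 sqrtr0 invr0 !mulr0 oppr0 mul0r.
have Ppos : 0 < P by rewrite lt_def Pn0 hP0.
have sPpos : 0 < Num.sqrt P by rewrite sqrtr_gt0.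
have st : 0 < Rr - t by lra.
rewrite -mulNr ler_pdivrMr // mulrAC ler_pdivlMr // -expr2 sqr_sqrtr //.
rewrite hE; lra.
Qed.
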